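(* Let $\alpha\in(0,\pi/2)$, $\theta^*_d>0$ and $E_s$ satisfy $E_s>\frac{(\theta^*_d)^2}{2\cos^2\alpha}+\cos\alpha$. Put $$L^*_d=\sqrt{2E_s-(\theta^*_d)^2-2\cos\alpha},\qquad Y^*=\cos\alpha+\tfrac12\left(\theta^*_d\sin\alpha-L^*_d\cos\alpha\right)^2 .$$ Let $$b=4\theta^*_dL^*_d-2\frac{\theta^*_d}{L^*_d}\left((\theta^*_d)^2-\cos\alpha\right)-\tfrac12\pi^2\sin\alpha,\qquad \Delta=\pi^2(\theta^*_d)^2+8\alpha b .$$ Assume $\Delta\ge0$, and define the spring stiffness $$K=\frac{\left(\pi\theta^*_d+\sqrt{\Delta}\right)^2}{16\alpha^2},\qquad \varepsilon=1/\sqrt K .$$ For $Y\in(\cos\alpha,E_s)$ define $\theta_d(Y)$ and $L_d(Y)$ as in the context. Define the angle swept in stance by $$\Delta\theta(Y)=\pi\theta_d(Y)\,\varepsilon+\Big[4\theta_d(Y)L_d(Y)-2\frac{\theta_d(Y)}{L_d(Y)}\big(\theta_d(Y)^2-\cos\alpha\big)-\tfrac12\pi^2\sin\alpha\Big]\varepsilon^2,$$ and the apex return map by $$f(Y)=\cos\big(\alpha-\Delta\theta(Y)\big)+\Big[\sin\big(2\alpha-\Delta\theta(Y)\big)\sqrt{E_s-Y}+\cos\big(2\alpha-\Delta\theta(Y)\big)\sqrt{Y-\cos\alpha}\Big]^2 .$$ Let $d_i\Delta\theta^*=\frac{d}{dY}\Delta\theta(Y)\big|_{Y=Y^*}$ and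 $$D=\theta^*_d\cos2\alpha\,\sqrt{2E_s-(\theta^*_d)^2-2\cos\alpha}+\sin2\alpha\left[E_s-(\theta^*_d)^2-\cos\alpha\right].$$ If $$d_i\Delta\theta^*\in\left(0,\ \frac{2}{\sin\alpha+D}\right),$$ then $Y^*$ is a stable fixed point of $f$, that is, $f(Y^* )=Y^*$ and $|f'(Y^* )|<1$.
   Context: This concerns the dimensionless spring-mass (spring-loaded inverted pendulum) running model with leg rest length $1$, attack angle $\alpha$ (touch-down at $\theta=-\alpha$, height $\cos\alpha$) and total energy $E_s$. For an apex height $Y$, the touch-down angular velocity and radial speed are $$\theta_d(Y)=\sqrt2\left[\cos\alpha\sqrt{E_s-Y}-\sin\alpha\sqrt{Y-\cos\alpha}\right],\qquad L_d(Y)=\sqrt2\left[\sin\alpha\sqrt{E_s-Y}+\cos\alpha\sqrt{Y-\cos\alpha}\right].$$ The quantity $\Delta\theta$ is the second-order (in $\varepsilon=K^{-1/2}$) asymptotic approximation of the stance sweep angle. The map $f$ sends one flight apex height to the next. The stiffness $K$ is chosen so that the stance is symmetric at $Y^*$, i.e. $\Delta\theta(Y^* )=2\alpha$. Note that $\theta_d(Y^* )=\theta^*_d$ and $L_d(Y^* )=L^*_d$. *)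

(* Defs.v *)
From Stdlib Require Import Reals.
From Coquelicot Require Import Coquelicot.
Open Scope R_scope.

Definition Ldstar (al Es thd : R) : R := sqrt (2 * Es - thd ^ 2 - 2 * cos al).

Definition Ystar (al Es thd : R) : R :=
  cos al + / 2 * (thd * sin al - Ldstar al Es thd * cos al) ^ 2.

Definition bcoef (al Es thd : R) : R :=
  4 * thd * Ldstar al Es thd
  - 2 * (thd / Ldstar al Es thd) * (thd ^ 2 - cos al)
  - / 2 * PI ^ 2 * sin al.

Definition Disc (al Es thd : R) : R := PI ^ 2 * thd ^ 2 + 8 * al * bcoef al Es thd.

Definition Kstiff (al Es thd : R) : R :=
  (PI * thd + sqrt (Disc al Es thd)) ^ 2 / (16 * al ^ 2).

Definition eps (al Es thd : R) : R := 1 / sqrt (Kstiff al Es thd).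

(* touch-down angular velocity and radial speed for apex height Y *)
Definition theta_d (al Es Y : R) : R :=
  sqrt 2 * (cos al * sqrt (Es - Y) - sin al * sqrt (Y - cos al)).

Definition L_d (al Es Y : R) : R :=
  sqrt 2 * (sin al * sqrt (Es - Y) + cos al * sqrt (Y - cos al)).

Definition DeltaTheta (al Es thd Y : R) : R :=
  let th := theta_d al Es Y in
  let L := L_d al Es Y in
  let e := eps al Es thd in
  PI * th * e
  + (4 * th * L - 2 * (th / L) * (th ^ 2 - cos al) - / 2 * PI ^ 2 * sin al) * e ^ 2.

Definition fmap (al Es thd Y : R) : R :=
  let dt := DeltaTheta al Es thd Y in
  cos (al - dt)
  + (sin (2 * al - dt) * sqrt (Es - Y) + cos (2 * al - dt) * sqrt (Y - cos al)) ^ 2.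

Definition Dcoef (al Es thd : R) : R :=
  thd * cos (2 * al) * sqrt (2 * Es - thd ^ 2 - 2 * cos al)
  + sin (2 * al) * (Es - thd ^ 2 - cos al).

(* Main.v *)
Require Import Defs.
From Stdlib Require Import Reals Lra Psatz.
From Coquelicot Require Import Coquelicot.
Open Scope R_scope.

Lemma fderiv (g : R -> R) y dg a b c : is_derive g y dg -> 0 < b - y -> 0 < y - c ->
  g y = 2 * a ->
  is_derive (fun Y => cos (a - g Y) + (sin (2*a - g Y) * sqrt (b - Y) + cos (2*a - g Y) * sqrt (Y - c))^2) y
    (1 - dg * (sin a + 2 * sqrt (b - y) * sqrt (y - c))).
Proof.
intros Hg H1 H2 Hgy.
assert (Hs : sqrt (y - c) <> 0) by (apply Rgt_not_eq, sqrt_lt_R0; lra).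
auto_derive.
- repeat split; try (exists dg; exact Hg); lra.
- match goal with |- context [Derive ?f y] => replace (Derive f y) with dg by (symmetry; apply is_derive_unique; exact Hg) end.
  rewrite Hgy.
  replace (a + - (2 * a)) with (- a) by ring.
  replace (2 * a + - (2 * a)) with 0 by ring.
  rewrite sin_0, cos_0, sin_neg.
  replace (y + - c) with (y - c) by ring.
  replace (b + - y) with (b - y) by ring.
  field. split; auto.
  apply Rgt_not_eq, sqrt_lt_R0; lra.
Qed.

Theorem theorem2 (al Es thd : R) :
  0 < al < PI / 2 ->
  0 < thd ->
  Es > thd ^ 2 / (2 * cos al ^ 2) + cos al ->
  0 <= Disc al Es thd ->
  forall dDT : R,
    is_derive (DeltaTheta al Es thd) (Ystar al Es thd) dDT ->
    0 < dDT < 2 / (sin al + Dcoef al Es thd) ->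
    fmap al Es thd (Ystar al Es thd) = Ystar al Es thd /\
    ex_derive (fmap al Es thd) (Ystar al Es thd) /\
    Rabs (Derive (fmap al Es thd) (Ystar al Es thd)) < 1.
Proof.
intros Hal Hthd HEs HD dDT Hder HdDT.
assert (Hc : 0 < cos al) by (apply cos_gt_0; lra).
assert (Hs : 0 < sin al) by (apply sin_gt_0; lra).
assert (Hsc : sin al ^ 2 + cos al ^ 2 = 1) by (pose proof (sin2_cos2 al); unfold Rsqr in *; lra).
set (c := cos al) in *. set (s := sin al) in *.
set (A := 2 * Es - thd ^ 2 - 2 * c).
assert (HAc : A * c ^ 2 > thd ^ 2 * s ^ 2).
{ set (q := thd ^ 2 / (2 * c ^ 2)) in HEs.
  assert (q * (2 * c ^ 2) = thd ^ 2) by (unfold q; field; lra).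
  assert (2 * c^2 * Es > 2 * c^2 * (q + c)) by (apply Rmult_lt_compat_l; nra).
  unfold A. replace (thd ^ 2 * s ^ 2) with (thd^2 * (s^2 + c^2) - thd^2 * c^2) by ring.
  rewrite Hsc. nra. }
assert (HA : 0 < A).
{ assert (0 <= thd^2*s^2) by (apply Rmult_le_pos; apply pow2_ge_0).
  apply (Rmult_lt_reg_r (c^2)); [nra | lra]. }
set (L := Ldstar al Es thd).
assert (HL : 0 < L) by (apply sqrt_lt_R0; exact HA).
assert (HL2 : L * L = A) by (apply sqrt_sqrt; lra).
assert (HLc : thd * s < L * c).
{ destruct (Rlt_or_le (thd * s) (L * c)) as [h|h]; auto. exfalso.
  assert (0 < L * c) by nra.
  assert ((L*c)*(L*c) <= (thd*s)*(thd*s)) by (apply Rmult_le_compat; lra).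
  replace ((L*c)*(L*c)) with (A * c^2) in H0 by (rewrite <- HL2; ring).
  lra. }
set (Y := Ystar al Es thd).
assert (HY1 : Y - c = / 2 * (L * c - thd * s) ^ 2) by (unfold Y, Ystar; fold c s L; ring).
assert (HY2 : Es - Y = / 2 * (thd * c + L * s) ^ 2).
{ unfold Y, Ystar; fold c s L. apply Rminus_diag_uniq.
  replace (Es - (c + / 2 * (thd * s - L * c) ^ 2) - / 2 * (thd * c + L * s) ^ 2)
    with (Es - c - / 2 * (thd ^ 2 + L * L) * (s ^ 2 + c ^ 2)) by ring.
  rewrite HL2, Hsc. unfold A. field. }
assert (Hs2 : sqrt 2 * sqrt 2 = 2) by (apply sqrt_sqrt; lra).
assert (Hs2p : 0 < sqrt 2) by (apply sqrt_lt_R0; lra).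
set (u := sqrt (Es - Y)). set (v := sqrt (Y - c)).
assert (Hu : sqrt 2 * u = thd * c + L * s).
{ unfold u. rewrite <- sqrt_mult_alt by lra. rewrite HY2.
  replace (2 * (/ 2 * (thd * c + L * s) ^ 2)) with ((thd * c + L * s) ^ 2) by field.
  apply sqrt_pow2. nra. }
assert (Hv : sqrt 2 * v = L * c - thd * s).
{ unfold v. rewrite <- sqrt_mult_alt by lra. rewrite HY1.
  replace (2 * (/ 2 * (L * c - thd * s) ^ 2)) with ((L * c - thd * s) ^ 2) by field.
  apply sqrt_pow2. nra. }
assert (Hth : theta_d al Es Y = thd).
{ unfold theta_d; fold c s u v.
  replace (sqrt 2 * (c * u - s * v)) with (c * (sqrt 2 * u) - s * (sqrt 2 * v)) by ring.
  rewrite Hu, Hv. replace thd with (thd * (s^2 + c^2)) at 3 by (rewrite Hsc; ring). ring. }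
assert (HLd : L_d al Es Y = L).
{ unfold L_d; fold c s u v.
  replace (sqrt 2 * (s * u + c * v)) with (s * (sqrt 2 * u) + c * (sqrt 2 * v)) by ring.
  rewrite Hu, Hv. replace L with (L * (s^2 + c^2)) at 3 by (rewrite Hsc; ring). ring. }
set (S := sqrt (Disc al Es thd)).
assert (HS : S * S = Disc al Es thd) by (apply sqrt_sqrt; exact HD).
assert (HS0 : 0 <= S) by apply sqrt_pos.
assert (HPI : 0 < PI) by apply PI_RGT_0.
assert (HP : 0 < PI * thd + S) by nra.
assert (Heps : eps al Es thd = 4 * al / (PI * thd + S)).
{ unfold eps, Kstiff; fold S.
  replace ((PI * thd + S) ^ 2 / (16 * al ^ 2)) with (((PI * thd + S) / (4 * al)) ^ 2) by (field; lra).
  rewrite sqrt_pow2.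
  - field; lra.
  - apply Rlt_le, Rdiv_lt_0_compat; lra. }
assert (HDT : DeltaTheta al Es thd Y = 2 * al).
{ unfold DeltaTheta. rewrite Hth, HLd, Heps.
  change (4 * thd * L - 2 * (thd / L) * (thd ^ 2 - cos al) - / 2 * PI ^ 2 * sin al) with (bcoef al Es thd).
  assert (Hb : bcoef al Es thd = (S * S - PI ^ 2 * thd ^ 2) / (8 * al)).
  { rewrite HS. unfold Disc. field. lra. }
  rewrite Hb. field. lra. }
assert (Hfe : fmap al Es thd = fun Y0 => cos (al - DeltaTheta al Es thd Y0) +
   (sin (2*al - DeltaTheta al Es thd Y0) * sqrt (Es - Y0) + cos (2*al - DeltaTheta al Es thd Y0) * sqrt (Y0 - c))^2).
{ reflexivity. }
assert (HYc : 0 < Y - c) by (rewrite HY1; apply Rmult_lt_0_compat; [lra | apply pow_lt; lra]).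
assert (HEY : 0 < Es - Y).
{ assert (0 < thd * c) by (apply Rmult_lt_0_compat; lra).
  assert (0 < L * s) by (apply Rmult_lt_0_compat; lra).
  rewrite HY2; apply Rmult_lt_0_compat; [lra | apply pow_lt; lra]. }
pose proof (fderiv _ _ _ al Es c Hder HEY HYc HDT) as Hf.
assert (Hf2 : is_derive (fmap al Es thd) Y (1 - dDT * (s + 2 * u * v))) by (rewrite Hfe; exact Hf).
clear Hf. rename Hf2 into Hf.
assert (HDc : Dcoef al Es thd = 2 * u * v).
{ unfold Dcoef. fold c A. change (sqrt A) with L. rewrite cos_2a, sin_2a. fold c s.
  assert (E : (sqrt 2 * u) * (sqrt 2 * v) = 2 * u * v).
  { transitivity ((sqrt 2 * sqrt 2) * u * v); [ring | rewrite Hs2; ring]. }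
  rewrite <- E, Hu, Hv.
  replace (c * c - s * s) with (2 * c^2 - 1) by lra.
  apply Rminus_diag_uniq.
  replace (thd * (2 * c ^ 2 - 1) * L + 2 * s * c * (Es - thd ^ 2 - c) -
           (thd * c + L * s) * (L * c - thd * s))
    with (thd * L * ((s^2 + c ^ 2) - 1) + s * c * (2 * Es - thd^2 - 2 * c - L * L)) by field.
  rewrite HL2. unfold A. rewrite Hsc. ring. }
assert (Huv : 0 < 2 * u * v).
{ assert (E : (sqrt 2 * u) * (sqrt 2 * v) = 2 * u * v).
  { transitivity ((sqrt 2 * sqrt 2) * u * v); [ring | rewrite Hs2; ring]. }
  rewrite <- E, Hu, Hv.
  assert (0 < thd * c) by (apply Rmult_lt_0_compat; lra).
  assert (0 < L * s) by (apply Rmult_lt_0_compat; lra).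
  apply Rmult_lt_0_compat; lra. }
rewrite HDc in HdDT.
split; [| split].
- rewrite Hfe, HDT.
  replace (al - 2 * al) with (- al) by ring.
  replace (2 * al - 2 * al) with 0 by ring.
  rewrite cos_neg, sin_0, cos_0. fold c v.
  replace ((0 * sqrt (Es - Y) + 1 * v) ^ 2) with (v * v) by ring.
  unfold v. rewrite sqrt_sqrt by lra. ring.
- exists (1 - dDT * (s + 2 * u * v)). exact Hf.
- rewrite (is_derive_unique _ _ _ Hf).
  destruct HdDT as [H1 H2].
  assert (Hk : dDT * (s + 2 * u * v) < 2).
  { apply (Rmult_lt_compat_r (s + 2 * u * v)) in H2; [| lra].
    replace (2 / (s + 2 * u * v) * (s + 2 * u * v)) with 2 in H2 by (field; lra). exact H2. }
  assert (0 < dDT * (s + 2 * u * v)) by nra.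
  apply Rabs_def1; lra.
Qed.
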